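(* Let $(G,\ell)$ be a complete edge-colored permutation graph, where $G=(V,E_1,\dots,E_k)$. Then $G$ does not contain a rainbow triangle, and for each $i\in\{1,\dots,k\}$ the monochromatic subgraph $G_{|i}$ together with $\ell$ is a simple permutation graph.
   Context: A complete $k$-edge-colored graph $G=(V,E_1,\dots,E_k)$ is the complete graph on a finite set $V$ with edges partitioned into $k$ nonempty color classes $E_i$; $G_{|i}=(V,E_i)$. A labeling is a bijection $\ell:V\to\{1,\dots,|V|\}$. A graph $(V,E)$ with labeling $\ell$ is a simple permutation graph of a permutation $\pi$ if for all $u,v$ with $\ell(u)>\ell(v)$: $\{u,v\}\in E$ iff $\pi^{-1}(\ell(u))<\pi^{-1}(\ell(v))$. $(G,\ell)$ is a complete edge-colored permutation graph if there exist permutations $\pi_1,\dots,\pi_k$ with $(G_{|i},\ell)$ a simple permutation graph of $\pi_i$ for all $i$. A rainbow triangle is a set of three vertices whose three edges have pairwise distinct colors. *)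

(* Defs.v *)
From mathcomp Require Import all_boot all_order all_fingroup.
Set Implicit Arguments. Unset Strict Implicit. Unset Printing Implicit Defensive.

(* A complete k-edge-colored graph on a finite vertex type V is given by a
   colouring c : V -> V -> 'I_k of the (unordered) pairs of distinct vertices:
   c must be symmetric and every colour class must be nonempty.  Values of
   c x x are irrelevant. *)
Definition complete_colored (V : finType) (k : nat) (c : V -> V -> 'I_k) : Prop :=
  (forall u v, c u v = c v u) /\
  (forall i : 'I_k, exists u v, u != v /\ c u v = i).

Definition mono (V : finType) (k : nat) (c : V -> V -> 'I_k) (i : 'I_k) : rel V :=
  fun u v => (u != v) && (c u v == i).

(* Labeling: bijection V -> {1..|V|}, encoded 0-based as V -> 'I_#|V|. *)
Definition labeling (V : finType) (l : V -> 'I_#|V|) : Prop := bijective l.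

Definition simple_perm_graph_of (V : finType) (E : rel V) (l : V -> 'I_#|V|)
  (pi : {perm 'I_#|V|}) : Prop :=
  forall u v, (l v < l u)%N ->
    (E u v <-> (pi^-1%g (l u) < pi^-1%g (l v))%N).

Definition simple_perm_graph (V : finType) (E : rel V) (l : V -> 'I_#|V|) : Prop :=
  exists pi : {perm 'I_#|V|}, simple_perm_graph_of E l pi.

Definition colored_perm_graph (V : finType) (k : nat) (c : V -> V -> 'I_k)
  (l : V -> 'I_#|V|) : Prop :=
  exists pis : 'I_k -> {perm 'I_#|V|},
    forall i : 'I_k, simple_perm_graph_of (mono c i) l (pis i).

Definition rainbow_triangle (V : finType) (k : nat) (c : V -> V -> 'I_k)
  (x y z : V) : Prop :=
  [/\ x != y, y != z, x != z &
      [/\ c x y != c y z, c x y != c x z & c y z != c x z]].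

(* Main.v *)
Require Import Defs.
From mathcomp Require Import all_boot all_order all_fingroup.

Lemma key_lemma (V : finType) (k : nat) (c : V -> V -> 'I_k)
  (l : V -> 'I_#|V|) :
  (forall u v, c u v = c v u) -> colored_perm_graph c l ->
  forall u v w, (l u < l v)%N -> (l v < l w)%N ->
  c u w = c u v \/ c u w = c v w.
Proof.
move=> sym [pis H] u v w luv lvw.
case: (eqVneq (c u w) (c u v)) => [->|n1]; first by left.
case: (eqVneq (c u w) (c v w)) => [->|n2]; first by right.
exfalso.
set m := c u w.
have luw : (l u < l w)%N by apply: ltn_trans luv lvw.
have [h1 _] := H m w u luw.
have := H m v u luv; case=> _ h2.
have := H m w v lvw; case=> _ h3.
have wu : w != u by apply/eqP=> E; move: luw; rewrite E ltnn.
have A : ((pis m)^-1%g (l w) < (pis m)^-1%g (l u))%N.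
  apply: h1; rewrite /mono wu /= sym eqxx //.
have B : ~~ ((pis m)^-1%g (l v) < (pis m)^-1%g (l u))%N.
  apply/negP=> /h2; rewrite /mono /= => /andP [_ /eqP E].
  by move: n1; rewrite (sym u v) E eqxx.
have C : ~~ ((pis m)^-1%g (l w) < (pis m)^-1%g (l v))%N.
  apply/negP=> /h3; rewrite /mono /= => /andP [_ /eqP E].
  by move: n2; rewrite (sym v w) E eqxx.
move: A B C; rewrite -!leqNgt => A B C.
have := leq_trans B C. by rewrite leqNgt A.
Qed.

Section R.
Variables (V : finType) (k : nat) (c : V -> V -> 'I_k).
Hypothesis sym : forall u v, c u v = c v u.
Lemma sw12 x y z : rainbow_triangle c x y z -> rainbow_triangle c y x z.
Proof.
case=> a b d [e f g]; rewrite /rainbow_triangle (sym y x).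
split; try (first [done | by rewrite eq_sym]); split; first [done | by rewrite eq_sym].
Qed.
Lemma sw23 x y z : rainbow_triangle c x y z -> rainbow_triangle c x z y.
Proof.
case=> a b d [e f g]; rewrite /rainbow_triangle (sym z y).
split; try (first [done | by rewrite eq_sym]); split; first [done | by rewrite eq_sym].
Qed.
End R.

Theorem proposition4p13 (V : finType) (k : nat) (c : V -> V -> 'I_k)
  (l : V -> 'I_#|V|) :
  complete_colored c -> labeling l -> colored_perm_graph c l ->
  (forall x y z : V, ~ rainbow_triangle c x y z) /\
  (forall i : 'I_k, simple_perm_graph (mono c i) l).
Proof.
move=> [sym _] lb cp; split; last first.
  by case: cp => pis H i; exists (pis i); apply: H.
have linj : injective l by apply: bij_inj.
have K := @key_lemma V k c l sym cp.
have S : forall u v w, (l u < l v)%N -> (l v < l w)%N -> ~ rainbow_triangle c u v w.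
  move=> u v w h1 h2 [_ _ _ [d1 d2 d3]].
  by case: (K _ _ _ h1 h2) => E; [move: d2|move: d3]; rewrite E eqxx.
have neq : forall a b, a != b -> (l a < l b)%N \/ (l b < l a)%N.
  move=> a b ab; case: (ltngtP (l a) (l b)) => h; [by left|by right|].
  by move: ab; rewrite (linj _ _ (val_inj h)) eqxx.
move=> x y z R; case: (R) => xy yz xz _.
have s12 := @sw12 V k c sym; have s23 := @sw23 V k c sym.
case: (neq _ _ xy) => o1; case: (neq _ _ yz) => o2; case: (neq _ _ xz) => o3.
all: try by move: (ltn_trans o1 o2); rewrite ltnNge ltnW.
all: try by move: (ltn_trans o2 o1); rewrite ltnNge ltnW.
all: have R2 := s12 _ _ _ R; have R3 := s23 _ _ _ R; have R4 := s12 _ _ _ R3;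
  have R5 := s23 _ _ _ R2; have R6 := s12 _ _ _ R5.
all: first [exact: S o1 o2 R | exact: S o3 o2 R3 | exact: S o3 o1 R4 |
  exact: S o2 o3 R5 | exact: S o2 o1 R6 | exact: S o1 o3 R2 | idtac].
Qed.
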